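(* The two-field star-triangle map is 4D consistent in the following sense. Let $n\in\mathbb Z^4$ and let generic data $(a^{ij},c^{ij})$ be given on the six plaquettes $\sigma^{ij}(n)$, $1\le i<j\le4$. (1) If $n$ is black: in each of the four 3D cubes at $n$ (directions $i,j,k$) apply $F$ to obtain data on the plaquettes $\sigma^{ij}(n+e_k)$; then, for each $\ell$ and each triple $\{i,j,k\}$ not containing $\ell$, apply $G$ in the 3D cube at the (white) vertex $n+e_\ell$ with directions $i,j,k$ to obtain data on $\sigma^{ij}(n+e_\ell+e_k)$, $\sigma^{jk}(n+e_\ell+e_i)$, $\sigma^{ki}(n+e_\ell+e_j)$. Each plaquette $\sigma^{ij}(n+e_k+e_\ell)$ thereby receives two values, one from the cube at $n+e_\ell$ (directions $i,j,k$) and one from the cube at $n+e_k$ (directions $i,j,\ell$). Then the two $c$-values coincide and the squares of the two $a$-values coincide. (2) If $n$ is white: in each of the four 3D cubes at $n$ apply $G$ (with an arbitrary choice of the sign of $D$ in each cube) to obtain data on $\sigma^{ij}(n+e_k)$; then apply $F$ in the 3D cubes at the (black) vertices $n+e_\ell$. Then the two values of $a$ and the two values of $c$ obtained for each plaquette $\sigma^{ij}(n+e_k+e_\ell)$ coincide, for any choice of the signs.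
   Context: Vertices of $\mathbb Z^4$ with even coordinate sum are black, others white; $e_i$ are the unit vectors. A plaquette $\sigma^{ij}(m)=(m,m+e_i,m+e_i+e_j,m+e_j)$ carries numbers $a^{ij}(m),c^{ij}(m)$ with $a^{ji}=-a^{ij}$, $c^{ji}=-c^{ij}$. For a 3D cube at $m$ with directions $(i,j,k)$, the ''base'' data are those on $\sigma^{ij}(m),\sigma^{jk}(m),\sigma^{ki}(m)$, denoted $(a^{ij},c^{ij}),(a^{jk},c^{jk}),(a^{ki},c^{ki})$, and the ''far'' data are those on $\sigma^{ij}(m+e_k),\sigma^{jk}(m+e_i),\sigma^{ki}(m+e_j)$, denoted $(a^{ij}_k,c^{ij}_k),(a^{jk}_i,c^{jk}_i),(a^{ki}_j,c^{ki}_j)$. The two-field star-triangle map $F$ (far in terms of base) is $$a^{ij}_k=\frac{a^{jk}a^{ki}}{c^{ij}+c^{jk}+c^{ki}},\qquad c^{ij}_k=\frac12\left(c^{jk}+c^{ki}-c^{ij}-\frac{(a^{jk})^2+(a^{ki})^2-(a^{ij})^2}{c^{ij}+c^{jk}+c^{ki}}\right)$$ and cyclically; these formulas are compatible with reordering of $(i,j,k)$. Its (two-valued) inverse $G$ (base in terms of far) is $$c^{ij}=c^{jk}_i+c^{ki}_j+\frac{a^{jk}_ia^{ki}_j}{a^{ij}_k},\qquad a^{ij}=\frac{D}{a^{ij}_k},\ a^{jk}=\frac{D}{a^{jk}_i},\ a^{ki}=\frac{D}{a^{ki}_j},$$ where $D$ is either square root of $D^2=(a^{ij}_ka^{jk}_i)^2+(a^{jk}_ia^{ki}_j)^2+(a^{ki}_ja^{ij}_k)^2+2a^{ij}_ka^{jk}_ia^{ki}_j(c^{ij}_k+c^{jk}_i+c^{ki}_j)$.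 In the procedures of the claim, $F$ or $G$ ''applied in the cube at $m$'' computes the far data of that cube from its base data. *)

(* Defs.v *)
From mathcomp Require Import all_boot all_order all_algebra.
Set Implicit Arguments. Unset Strict Implicit. Unset Printing Implicit Defensive.
Import Order.TTheory GRing.Theory Num.Theory.
Local Open Scope ring_scope.

(* Directions e_0..e_3 of Z^4 are indexed by 'I_4.
   Plaquette data around a vertex m: functions xa xc : 'I_4 -> 'I_4 -> R,
   xa i j = a^{ij}(m) (data on sigma^{ij}(m)), antisymmetric in (i,j). *)

Definition antisym (R : numFieldType) (x : 'I_4 -> 'I_4 -> R) :=
  forall i j, x j i = - x i j.

Definition distinct3 (i j k : 'I_4) := [&& i != j, j != k & k != i].
Definition distinct4 (i j k l : 'I_4) :=
  [&& distinct3 i j k, l != i, l != j & l != k].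

(* the direction not in {i,j,k} (for pairwise distinct i,j,k) *)
Definition fourth (i j k : 'I_4) : 'I_4 := inord (6 - (i + j + k))%N.

Section Maps.
Variable R : numFieldType.
Implicit Types (xa xc : 'I_4 -> 'I_4 -> R) (D : R).

(* Map F in the cube with directions (i,j,k): far data on sigma^{ij}(m+e_k)
   from the base data xa, xc on sigma^{..}(m). *)
Definition Fa xa xc (i j k : 'I_4) : R :=
  xa j k * xa k i / (xc i j + xc j k + xc k i).
Definition Fc xa xc (i j k : 'I_4) : R :=
  2^-1 * (xc j k + xc k i - xc i j
          - (xa j k ^+ 2 + xa k i ^+ 2 - xa i j ^+ 2) / (xc i j + xc j k + xc k i)).

(* Map G used as base -> far in the cube with directions (i,j,k): the
   "far" variables of the formula for G are the base data xa, xc of the cube,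
   and its outputs are the far data on sigma^{ij}(m+e_k). *)
Definition GD2 xa xc (i j k : 'I_4) : R :=
  (xa i j * xa j k) ^+ 2 + (xa j k * xa k i) ^+ 2 + (xa k i * xa i j) ^+ 2
  + 2 * xa i j * xa j k * xa k i * (xc i j + xc j k + xc k i).
Definition Gc xa xc (i j k : 'I_4) : R :=
  xc j k + xc k i + xa j k * xa k i / xa i j.
Definition Ga xa D (i j : 'I_4) : R := D / xa i j.

End Maps.

(* Main.v *)
Require Import Defs.
From mathcomp Require Import all_boot all_order all_algebra zify.
From mathcomp Require Import ring lra.
Import Order.TTheory GRing.Theory Num.Theory.
Local Open Scope ring_scope.

Lemma d3 {x y z : 'I_4} : x != y -> y != z -> z != x -> distinct3 x y z.
Proof. by move=> *; apply/and3P. Qed.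

Lemma d4 (i j k l : 'I_4) : distinct4 i j k l ->
  [/\ i != j, j != k, k != i & [/\ l != i, l != j & l != k]].
Proof. by case/and4P=> /and3P[] *; split. Qed.

Lemma fourthP (i j k l : 'I_4) : distinct4 i j k l -> fourth i j k = l.
Proof.
case/and4P=> /and3P[ij jk ki] li lj lk.
apply: val_inj; rewrite /fourth /=.
move: ij jk ki li lj lk; rewrite -!(inj_eq val_inj) /=.
have := ltn_ord i; have := ltn_ord j; have := ltn_ord k; have := ltn_ord l.
move=> *; rewrite inordK; lia.
Qed.

Lemma neq0_eq (R : numFieldType) (x y : R) : y != 0 -> y = x -> x != 0.
Proof. by move=> H <-. Qed.
Lemma neq0_opp (R : numFieldType) (x y : R) : y != 0 -> y = - x -> x != 0.
Proof. by move=> H E; move: H; rewrite E oppr_eq0. Qed.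
Lemma two_neq0 (R : numFieldType) : (2 : R) != 0.
Proof. by rewrite pnatr_eq0. Qed.

Ltac nz := match goal with
  | |- is_true (2 != 0) => exact: two_neq0
  | H : is_true (?y != 0) |- is_true (?x != 0) =>
     first [ apply: (@neq0_eq _ _ _ H); ring | apply: (@neq0_opp _ _ _ H); ring ]
  end.
Ltac nzs := repeat (apply/andP; split); nz.
Lemma neq0_mul (R : numFieldType) (x y m : R) : y != 0 -> m != 0 -> y * m = x -> x != 0.
Proof. by move=> H M <-; rewrite mulf_neq0. Qed.
Lemma neq0_mulN (R : numFieldType) (x y m : R) : y != 0 -> m != 0 -> y * m = - x -> x != 0.
Proof. by move=> H M E; move: (mulf_neq0 H M); rewrite E oppr_eq0. Qed.
Ltac mnz s m := first [ apply: (@neq0_mul _ _ _ _ s m); field; nzs | apply: (@neq0_mulN _ _ _ _ s m); field; nzs ].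

Ltac dd := by apply/and4P; split => //; apply/and3P.

Lemma part2 (R : numFieldType) :
  (forall (a c : 'I_4 -> 'I_4 -> R) (D : 'I_4 -> R),
    antisym a -> antisym c ->
    (forall i j k m, distinct4 i j k m -> D m ^+ 2 = GD2 a c i j k) ->
    let B1 := fun l p q => Ga a (D (fourth p q l)) p q in
    let E1 := fun l p q => Gc a c p q l in
    (forall i j, i != j -> a i j != 0) ->
    (forall i j k l, distinct4 i j k l -> E1 l i j + E1 l j k + E1 l k i != 0) ->
    forall i j k l, distinct4 i j k l ->
      Fa (B1 l) (E1 l) i j k = Fa (B1 k) (E1 k) i j l /\
      Fc (B1 l) (E1 l) i j k = Fc (B1 k) (E1 k) i j l).
Proof.
move=> a c D Ha Hc HD B1 E1 Ha0 HE i j k l Hd.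
case/d4: (Hd) => ij jk ki [li lj lk].
have il : i != l by rewrite eq_sym.
have jl : j != l by rewrite eq_sym.
have kl : k != l by rewrite eq_sym.
have ji : j != i by rewrite eq_sym.
have kj : k != j by rewrite eq_sym.
have ik : i != k by rewrite eq_sym.
have s1 := HE _ _ _ _ Hd.
have s2 := HE i j l k ltac:(dd).
have f1 := @fourthP j k l i ltac:(dd).
have f2 := @fourthP k i l j ltac:(dd).
have f3 := @fourthP i j l k ltac:(dd).
have f4 := @fourthP j l k i ltac:(dd).
have f5 := @fourthP l i k j ltac:(dd).
have f6 := @fourthP i j k l ltac:(dd).
have e1 := HD j k l i ltac:(dd).
have e2 := HD i k l j ltac:(dd).
have e3 := HD i j l k ltac:(dd).
have e4 := HD i j k l ltac:(dd).
have n1 := Ha0 _ _ ij. have n2 := Ha0 _ _ jk. have n3 := Ha0 _ _ ki.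
have n4 := Ha0 _ _ il. have n5 := Ha0 _ _ jl. have n6 := Ha0 _ _ kl.
rewrite /B1 /E1 /Fa /Fc /Ga /Gc f1 f2 f3 f4 f5 f6 !expr_div_n e1 e2 e3 e4 /GD2 in s1 s2 *.
rewrite ?(Ha i j) ?(Ha j k) ?(Ha k i) ?(Ha i l) ?(Ha j l) ?(Ha k l) in s1 s2 *.
rewrite ?(Hc i j) ?(Hc j k) ?(Hc k i) ?(Hc i l) ?(Hc j l) ?(Hc k l) in s1 s2 *.
have m1 : a i j * a j k * a k i != 0 by rewrite !mulf_neq0.
have m2 : a i j * a j l * a i l != 0 by rewrite !mulf_neq0.
split.
  field; repeat (apply/andP; split); first [nz | mnz s1 m1 | mnz s2 m2].
field; repeat (apply/andP; split); first [nz | mnz s1 m1 | mnz s2 m2].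
Qed.

Lemma part1 (R : numFieldType) :
  (forall (a c : 'I_4 -> 'I_4 -> R) (D : 'I_4 -> R),
    antisym a -> antisym c ->
    let A1 := fun l p q => Fa a c p q l in
    let C1 := fun l p q => Fc a c p q l in
    (forall i j k, distinct3 i j k -> c i j + c j k + c k i != 0) ->
    (forall i j l, distinct3 i j l -> A1 l i j != 0) ->
    (forall i j k l, distinct4 i j k l -> D l ^+ 2 = GD2 (A1 l) (C1 l) i j k) ->
    forall i j k l, distinct4 i j k l ->
      Gc (A1 l) (C1 l) i j k = Gc (A1 k) (C1 k) i j l /\
      Ga (A1 l) (D l) i j ^+ 2 = Ga (A1 k) (D k) i j ^+ 2).
Proof.
move=> a c D Ha Hc A1 C1 Hs HA HD i j k l Hd.
have Hd' : distinct4 i j l k.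
  by case/d4: Hd => ? ? ? [? ? ?]; apply/and4P; split; rewrite // 1?eq_sym //; apply/and3P; split; rewrite // eq_sym.
case/d4: (Hd) => ij jk ki [li lj lk].
rewrite /Ga !expr_div_n (HD _ _ _ _ Hd) (HD _ _ _ _ Hd').
have il : i != l by rewrite eq_sym.
have jl : j != l by rewrite eq_sym.
have kl : k != l by rewrite eq_sym.
have s1 := Hs _ _ _ (d3 ij jk ki).
have s2 := Hs _ _ _ (d3 ij jl li).
have s3 := Hs _ _ _ (d3 jk kl lj).
have s4 := Hs _ _ _ (d3 ki il lk).
have h1 := HA _ _ _ (d3 ij jl li).
have h2 := HA _ _ _ (d3 ij jk ki).
rewrite /A1 /C1 /Gc /GD2 /Fa /Fc in h1 h2 *.
rewrite ?(Ha i j) ?(Ha j k) ?(Ha k i) ?(Ha i l) ?(Ha j l) ?(Ha k l) in s1 s2 s3 s4 h1 h2 *.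
rewrite ?(Hc i j) ?(Hc j k) ?(Hc k i) ?(Hc i l) ?(Hc j l) ?(Hc k l) in s1 s2 s3 s4 h1 h2 *.
move: h1 h2; rewrite !mulf_eq0 !negb_or ?oppr_eq0 ?invr_eq0 => /andP[/andP[h3 h4] _] /andP[/andP[h5 h6] _].
split.
  field; nzs.
field; nzs.
Qed.


Theorem theorem10 (R : numFieldType) :
  (* (1) n black: F in the four cubes at n, then G in the cubes at n + e_l *)
  (forall (a c : 'I_4 -> 'I_4 -> R) (D : 'I_4 -> R),
    antisym a -> antisym c ->
    let A1 := fun l p q => Fa a c p q l in   (* a on sigma^{pq}(n+e_l) *)
    let C1 := fun l p q => Fc a c p q l in   (* c on sigma^{pq}(n+e_l) *)
    (* genericity: all denominators are nonzero *)
    (forall i j k, distinct3 i j k -> c i j + c j k + c k i != 0) ->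
    (forall i j l, distinct3 i j l -> A1 l i j != 0) ->
    (* D l : a square root of D^2 in the cube at n+e_l (directions <> l) *)
    (forall i j k l, distinct4 i j k l -> D l ^+ 2 = GD2 (A1 l) (C1 l) i j k) ->
    forall i j k l, distinct4 i j k l ->
      Gc (A1 l) (C1 l) i j k = Gc (A1 k) (C1 k) i j l /\
      Ga (A1 l) (D l) i j ^+ 2 = Ga (A1 k) (D k) i j ^+ 2) /\
  (* (2) n white: G in the four cubes at n (arbitrary signs), then F *)
  (forall (a c : 'I_4 -> 'I_4 -> R) (D : 'I_4 -> R),
    antisym a -> antisym c ->
    (* D m : either square root of D^2 in the cube at n with directions <> m *)
    (forall i j k m, distinct4 i j k m -> D m ^+ 2 = GD2 a c i j k) ->
    let B1 := fun l p q => Ga a (D (fourth p q l)) p q in (* a on sigma^{pq}(n+e_l) *)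
    let E1 := fun l p q => Gc a c p q l in                (* c on sigma^{pq}(n+e_l) *)
    (* genericity: all denominators are nonzero *)
    (forall i j, i != j -> a i j != 0) ->
    (forall i j k l, distinct4 i j k l -> E1 l i j + E1 l j k + E1 l k i != 0) ->
    forall i j k l, distinct4 i j k l ->
      Fa (B1 l) (E1 l) i j k = Fa (B1 k) (E1 k) i j l /\
      Fc (B1 l) (E1 l) i j k = Fc (B1 k) (E1 k) i j l).
Proof.
split; [exact: part1 | exact: part2].
Qed.
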